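(* Let $T:X\rightrightarrows X^*$ be a monotone operator. Then $T$ is maximal pseudomonotone if and only if $T=X\times\{0\}$.
   Context: $X$ is a real Banach space with dual $X^*$ and pairing $\langle x,x^*\rangle=x^*(x)$. A multivalued operator $T:X\rightrightarrows X^*$ is identified with its graph $T\subset X\times X^*$. $T$ is monotone if $\langle x-y,x^*-y^*\rangle\ge0$ for all $(x,x^* ),(y,y^* )\in T$. $T$ is pseudomonotone if for all $(x,x^* ),(y,y^* )\in T$, $\langle y-x,x^*\rangle\ge0$ implies $\langle y-x,y^*\rangle\ge0$. $T$ is maximal pseudomonotone if it is pseudomonotone and for every pseudomonotone $S$ with $T\subset S$ one has $S=T$. *)

(* Defs.v *)
From Stdlib Require Import Reals.
Open Scope R_scope.
Set Implicit Arguments.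

Record BanachSpace := {
  carrier :> Type;
  vzero : carrier;
  vadd : carrier -> carrier -> carrier;
  vopp : carrier -> carrier;
  vscal : R -> carrier -> carrier;
  vnorm : carrier -> R;
  vadd_assoc : forall x y z, vadd x (vadd y z) = vadd (vadd x y) z;
  vadd_comm : forall x y, vadd x y = vadd y x;
  vadd_0l : forall x, vadd vzero x = x;
  vadd_oppr : forall x, vadd x (vopp x) = vzero;
  vscal_1 : forall x, vscal 1 x = x;
  vscal_assoc : forall a b x, vscal a (vscal b x) = vscal (a * b) x;
  vscal_addl : forall a b x, vscal (a + b) x = vadd (vscal a x) (vscal b x);
  vscal_addr : forall a x y, vscal a (vadd x y) = vadd (vscal a x) (vscal a y);
  vnorm_ge0 : forall x, 0 <= vnorm x;
  vnorm_eq0 : forall x, vnorm x = 0 -> x = vzero;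
  vnorm_scal : forall a x, vnorm (vscal a x) = Rabs a * vnorm x;
  vnorm_triangle : forall x y, vnorm (vadd x y) <= vnorm x + vnorm y;
  vcomplete : forall u : nat -> carrier,
    (forall eps, 0 < eps -> exists N, forall m n, (N <= m)%nat -> (N <= n)%nat ->
        vnorm (vadd (u m) (vopp (u n))) < eps) ->
    exists l, forall eps, 0 < eps -> exists N, forall n, (N <= n)%nat ->
        vnorm (vadd (u n) (vopp l)) < eps
}.

Definition vsub {X : BanachSpace} (x y : X) : X := vadd X x (vopp X y).

Record dual (X : BanachSpace) := {
  dfun :> X -> R;
  dfun_add : forall x y, dfun (vadd X x y) = dfun x + dfun y;
  dfun_scal : forall a x, dfun (vscal X a x) = a * dfun x;
  dfun_bounded : exists M, forall x, Rabs (dfun x) <= M * vnorm X x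
}.

Definition pairing {X : BanachSpace} (x : X) (xs : dual X) : R := dfun xs x.

Lemma dual0_add (X : BanachSpace) : forall x y : X,
  (fun _ : X => 0) (vadd X x y) = (fun _ : X => 0) x + (fun _ : X => 0) y.
Proof. intros; simpl; ring. Qed.
Lemma dual0_scal (X : BanachSpace) : forall (a : R) (x : X),
  (fun _ : X => 0) (vscal X a x) = a * (fun _ : X => 0) x.
Proof. intros; simpl; ring. Qed.
Lemma dual0_bounded (X : BanachSpace) :
  exists M, forall x : X, Rabs ((fun _ : X => 0) x) <= M * vnorm X x.
Proof. exists 0; intros; rewrite Rabs_R0; right; ring. Qed.

Definition dual0 (X : BanachSpace) : dual X :=
  {| dfun := fun _ => 0; dfun_add := dual0_add X;
     dfun_scal := dual0_scal X; dfun_bounded := dual0_bounded X |}.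

(** A multivalued operator T : X ⇉ X^*, identified with its graph. *)
Definition operator (X : BanachSpace) := X -> dual X -> Prop.

Definition monotone (X : BanachSpace) (T : operator X) : Prop :=
  forall x xs y ys, T x xs -> T y ys ->
    0 <= pairing (vsub x y) xs - pairing (vsub x y) ys.

Definition pseudomonotone (X : BanachSpace) (T : operator X) : Prop :=
  forall x xs y ys, T x xs -> T y ys ->
    0 <= pairing (vsub y x) xs -> 0 <= pairing (vsub y x) ys.

Definition maximal_pseudomonotone (X : BanachSpace) (T : operator X) : Prop :=
  pseudomonotone T /\
  forall S : operator X, pseudomonotone S ->
    (forall x xs, T x xs -> S x xs) -> (forall x xs, S x xs <-> T x xs).

(* Main.v *)
Require Import Defs.
From Stdlib Require Import Reals.
From Stdlib Require Import Lra Classical FunctionalExtensionality ProofIrrelevance.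
Open Scope R_scope.

Lemma dual_ext (X : BanachSpace) (xs ys : dual X) :
  (forall x, xs x = ys x) -> xs = ys.
Proof.
  destruct xs as [f fa fs fb], ys as [g ga gs gb]; simpl; intros H.
  assert (f = g) by (apply functional_extensionality; exact H). subst g.
  f_equal; apply proof_irrelevance.
Qed.

Lemma dzero (X : BanachSpace) (xs : dual X) : xs (vzero X) = 0.
Proof.
  pose proof (dfun_add xs (vzero X) (vzero X)) as H.
  rewrite vadd_0l in H. lra.
Qed.

Lemma dopp (X : BanachSpace) (xs : dual X) y : xs (vopp X y) = - xs y.
Proof.
  pose proof (dfun_add xs y (vopp X y)) as H.
  rewrite vadd_oppr, dzero in H. lra.
Qed.

Lemma pairE (X : BanachSpace) (a b : X) xs : pairing (vsub a b) xs = xs a - xs b.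
Proof. unfold pairing, vsub. rewrite dfun_add, dopp. ring. Qed.

Section Sc.
Variable X : BanachSpace.
Variable c : R.
Variable xs : dual X.
Lemma dsc_add : forall x y, (fun z => c * xs z) (vadd X x y) = (fun z => c * xs z) x + (fun z => c * xs z) y.
Proof. intros; simpl; rewrite dfun_add; ring. Qed.
Lemma dsc_scal : forall a x, (fun z => c * xs z) (vscal X a x) = a * (fun z => c * xs z) x.
Proof. intros; simpl; rewrite dfun_scal; ring. Qed.
Lemma dsc_bd : exists M, forall x, Rabs ((fun z => c * xs z) x) <= M * vnorm X x.
Proof.
  destruct (dfun_bounded xs) as [M HM]. exists (Rabs c * M). intros x; simpl.
  rewrite Rabs_mult, Rmult_assoc. apply Rmult_le_compat_l; [apply Rabs_pos| apply HM].
Qed.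
Definition dscal : dual X := {| dfun := fun z => c * xs z; dfun_add := dsc_add; dfun_scal := dsc_scal; dfun_bounded := dsc_bd |}.
End Sc.

Theorem mainTheorem10 (X : BanachSpace) (T : operator X) :
  monotone T ->
  (maximal_pseudomonotone T <-> (forall (x : X) (xs : dual X), T x xs <-> xs = dual0 X)).
Proof.
  intros Hmon; split.
  - intros [Hps Hmax].
    assert (Hsc : forall x xs l, 0 < l -> T x xs -> T x (@dscal X l xs)).
    { intros x xs l Hl Hx.
      set (S1 := fun x ys => exists l xs, 0 < l /\ T x xs /\ forall y, ys y = l * xs y).
      assert (HS1 : pseudomonotone S1).
      { intros a as_ b bs [l1 [a1 [Hl1 [Ha1 E1]]]] [l2 [b1 [Hl2 [Hb1 E2]]]].
        rewrite !pairE, !E1, !E2. intros Hp.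
        assert (0 <= pairing (vsub b a) a1).
        { rewrite pairE. apply Rmult_le_reg_l with l1; lra. }
        specialize (Hps _ _ _ _ Ha1 Hb1 H). rewrite pairE in Hps. nra. }
      apply (Hmax S1 HS1).
      + intros a as_ Ha. exists 1, as_. split; [lra|split; [auto|intros; ring]].
      + exists l, xs. repeat split; auto. }
    assert (HF : forall x xs y ys, T x xs -> T y ys -> 0 <= xs x - xs y).
    { intros x xs y ys Hx Hy.
      destruct (Rle_or_lt 0 (xs x - xs y)) as [h|h]; auto. exfalso.
      set (b := ys x - ys y).
      set (l := (Rabs b + 1) / (- (xs x - xs y))).
      assert (Hl : 0 < l).
      { unfold l. apply Rdiv_lt_0_compat; [pose proof (Rabs_pos b)|]; lra. }
      pose proof (Hmon _ _ _ _ (Hsc x xs l Hl Hx) Hy) as M.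
      rewrite !pairE in M. simpl in M.
      assert (E : l * xs x - l * xs y = - (Rabs b + 1)).
      { unfold l. field. lra. }
      pose proof (Rle_abs (- b)). rewrite Rabs_Ropp in H. unfold b in *. lra. }
    assert (Hz : forall x xs y, T x xs -> xs y = 0).
    { intros x0 xs0 y H0. apply NNPP; intros Hne.
      set (w := vscal X (/ xs0 y) y).
      assert (Hw : xs0 w = 1) by (unfold w; rewrite dfun_scal; field; auto).
      set (z := vadd X x0 w).
      set (S3 := fun x xs => T x xs \/ (x = z /\ xs = xs0)).
      assert (HS3 : pseudomonotone S3).
      { intros a as_ b bs [Ha|[-> ->]] [Hb|[-> ->]]; rewrite !pairE.
        - intros; rewrite <- pairE; apply (Hps a as_ b bs); auto; rewrite pairE; auto.
        - intros _. unfold z. rewrite dfun_add, Hw.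
          pose proof (HF _ _ _ _ H0 Ha). lra.
        - unfold z. rewrite dfun_add, Hw. intros. pose proof (HF _ _ _ _ H0 Hb). lra.
        - lra. }
      assert (Tz : T z xs0) by (apply (Hmax S3 HS3); [intros; left; auto| right; auto]).
      pose proof (HF _ _ _ _ H0 Tz). unfold z in H. rewrite dfun_add, Hw in H. lra. }
    set (S4 := fun (x : X) (xs : dual X) => T x xs \/ (forall y, xs y = 0)).
    assert (HS4 : pseudomonotone S4).
    { intros a as_ b bs _ Hb _. rewrite pairE.
      destruct Hb as [Hb|Hb].
      - rewrite !(Hz _ _ _ Hb). lra.
      - rewrite !Hb. lra. }
    intros x xs; split.
    + intros Hx. apply dual_ext. intros y. rewrite (Hz _ _ _ Hx). reflexivity.
    + intros ->. apply (Hmax S4 HS4). intros; left; auto. right; intros; reflexivity.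
  - intros HT. split.
    + intros x xs y ys Hx Hy _. apply HT in Hy. subst. unfold pairing; simpl; lra.
    + intros S HS Hsub x xs; split.
      * intros Hx. apply HT. apply dual_ext. intros u. simpl.
        assert (Hge : forall y, xs y <= xs x).
        { intros y. assert (Sy : S y (dual0 X)) by (apply Hsub, HT; reflexivity).
          pose proof (HS _ _ _ _ Sy Hx) as P. rewrite !pairE in P. simpl in P. lra. }
        apply NNPP; intros Hne.
        set (t := (Rabs (xs x) + 1) / xs u).
        pose proof (Hge (vscal X t u)) as G. rewrite dfun_scal in G.
        assert (E : t * xs u = Rabs (xs x) + 1) by (unfold t; field; auto).
        pose proof (Rle_abs (xs x)). lra.
      * intros Hx. apply Hsub; exact Hx.
Qed.
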